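(* Fix an integer $m\geq 2$. Let $\Gamma$ be a distance-regular graph with smallest eigenvalue at least $-m$, valency $k\ge 2$, diameter $D\ge 2$ and intersection number $a_1$. Then $k< m(a_1+m)$.
   Context: A finite connected graph $\Gamma$ with diameter $D$ is distance-regular if there are integers $b_i,c_i$ ($0\le i\le D$) such that for any vertices $x,y$ with $d(x,y)=i$, exactly $c_i$ neighbours of $y$ are at distance $i-1$ from $x$ and exactly $b_i$ neighbours of $y$ are at distance $i+1$ from $x$; its valency is $k=b_0$ and $a_i:=k-b_i-c_i$ (so $a_1$ is the number of common neighbours of two adjacent vertices). The smallest eigenvalue is that of the adjacency matrix. *)

(* Defs.v *)
From mathcomp Require Import all_boot all_order all_algebra.
From mathcomp Require Import algC.
Set Implicit Arguments. Unset Strict Implicit. Unset Printing Implicit Defensive.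
Import Order.TTheory GRing.Theory Num.Theory.

Section Graphs.
Variable T : finType.
Variable e : rel T.

Definition simple_graph := symmetric e /\ irreflexive e.

Fixpoint ball (n : nat) (x : T) : {set T} :=
  match n with
  | 0 => [set x]
  | n'.+1 => ball n' x :|: [set z | [exists y in ball n' x, e y z]]
  end.

Definition connected_graph := forall x y : T, y \in ball #|T| x.

(* graph distance (the least n with y in ball n x; meaningful when connected) *)
Definition dist (x y : T) : nat :=
  find (fun n => y \in ball n x) (iota 0 #|T|.+1).

Definition diameter : nat := \max_(x : T) \max_(y : T) dist x y.

Definition regular_of_valency (k : nat) := forall x : T, #|[set z | e x z]| = k.

Definition a1_number (a1 : nat) :=
  forall x y : T, e x y -> #|[set z | e x z & e y z]| = a1.

Definition distance_regular :=
  [/\ simple_graph, connected_graph &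
   exists b c : nat -> nat, forall (i : nat) (x y : T), dist x y = i ->
     #|[set z | e y z & dist x z == i.-1]| = c i /\
     #|[set z | e y z & dist x z == i.+1]| = b i].

Definition adjmx : 'M[algC]_#|T| :=
  \matrix_(i, j) ((e (enum_val i) (enum_val j))%:R : algC)%R.

End Graphs.

(* Main.v *)
Require Import Defs.
From mathcomp Require Import all_boot all_order all_algebra.
From mathcomp Require Import algC.
From mathcomp Require Import ring.
Import Order.TTheory GRing.Theory Num.Theory.
Local Open Scope ring_scope.

Section PSD.
Local Open Scope sesquilinear_scope.
Lemma psd (n : nat) (A : 'M[algC]_n) (c : algC) : A \is hermsymmx ->
  (forall t, eigenvalue A t -> -c <= t) -> forall v : 'rV_n,
  0 <= (v *m A *m v^t*) 0 0 + c * (v *m v^t*) 0 0.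
Proof.
move=> hA hev v.
have /orthomx_spectralP Ae := hermitian_normalmx hA.
set P := spectralmx A in Ae; set d := spectral_diag A in Ae.
have Pu : P \is unitarymx by apply: spectral_unitarymx.
have Punit : P \in unitmx by apply: spectral_unit.
have ev i : eigenvalue A (d 0 i).
  apply/eigenvalueP; exists (delta_mx 0 i *m P).
    rewrite [in LHS]Ae !mulmxA mulmxK // -[_ *m diag_mx d]rowE row_diag_mx -scalemxAl //.
  apply/eqP => /(congr1 (mulmx^~ (invmx P))); rewrite mulmxK // mul0mx.
  by move/matrixP/(_ 0 i); rewrite !mxE !eqxx /= => /eqP; rewrite oner_eq0.
set w := v *m P^t*.
have wE : w^t* = P *m v^t* by rewrite /w trmx_mul map_mxM trmxCK.
have e1 : v *m A *m v^t* = w *m diag_mx d *m w^t*.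
  by rewrite wE Ae invmx_unitary // !mulmxA.
have e2 : v *m v^t* = w *m w^t*.
  by rewrite wE mulmxA /w -(mulmxA v) -invmx_unitary // mulVmx // mulmx1.
rewrite e1 e2 !mxE mulr_sumr -big_split /=.
apply: sumr_ge0 => i _.
rewrite mul_mx_diag !mxE; set z := \sum_j _.
rewrite mulrAC (mulrC c) -mulrDr.
apply: mulr_ge0; first exact: mul_conjC_ge0.
by rewrite -[c]opprK subr_ge0 hev.
Qed.
End PSD.
Section H.
Variable T : finType.

Lemma sumb (P : pred T) : \sum_x ((P x)%:R : algC) = (#|P|)%:R.
Proof.
rewrite -sum1_card natr_sum [RHS]big_mkcond /=; apply: eq_bigr => x _.
rewrite unfold_in; by case: (P x).
Qed.

Lemma sum_delta (x0 : T) (G : T -> algC) : \sum_x (x == x0)%:R * G x = G x0.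
Proof.
rewrite (bigD1 x0) //= eqxx mul1r big1 ?addr0 // => x /negbTE ->.
by rewrite mul0r.
Qed.

Lemma sum_ind (P : pred T) (h : T -> algC) a :
  (forall x, P x -> h x = a) -> \sum_x (P x)%:R * h x = (#|P|)%:R * a.
Proof.
move=> H; transitivity (\sum_x (P x)%:R * a).
  apply: eq_bigr => x _; case: (boolP (P x)) => Px; first by rewrite H.
  by rewrite !mul0r.
by rewrite -mulr_suml sumb.
Qed.

Lemma sum3 (a b c : T -> algC) :
  \sum_x (a x - b x + c x) = \sum_x a x - \sum_x b x + \sum_x c x.
Proof. by rewrite big_split sumrB. Qed.

Lemma sum_enum (F : T -> algC) : \sum_(i < #|T|) F (enum_val i) = \sum_x F x.
Proof. by rewrite -(big_enum_val F). Qed.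
End H.
Lemma ball_sub (T : finType) (e : rel T) :
  (forall x y z, e x z -> e z y -> x = y \/ e x y) ->
  forall n x y, y \in ball e n x -> (y == x) || e x y.
Proof.
move=> H; elim=> [|n IH] x y /=; first by rewrite in_set1 => ->.
rewrite in_setU => /orP [/IH //|]; rewrite inE => /existsP [w /andP [wB ewy]].
case/orP: (IH _ _ wB) => [/eqP wx | exw]; first by rewrite -wx ewy orbT.
by case: (H x y w exw ewy) => [-> | ->]; rewrite ?eqxx ?orbT.
Qed.

Lemma dist_le1 (T : finType) (e : rel T) :
  connected_graph e ->
  (forall x y z, e x z -> e z y -> x = y \/ e x y) ->
  forall x y, (dist e x y <= 1)%N.
Proof.
move=> C H x y.
have cT : (0 < #|T|)%N by apply/card_gt0P; exists x.
have yb : y \in ball e 1 x.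
  case/orP: (@ball_sub T e H _ _ _ (C x y)) => [/eqP -> | exy] /=.
    by rewrite in_setU in_set1 eqxx.
  by rewrite in_setU; apply/orP; right; rewrite inE; apply/existsP; exists x; rewrite in_set1 eqxx.
rewrite leqNgt; apply/negP => lt.
have := before_find 0 lt; rewrite nth_iota //= ?ltnS //.
by rewrite yb.
Qed.

Theorem lemma3p2 (m : nat) (T : finType) (e : rel T) (k D a1 : nat) :
  (2 <= m)%N ->
  distance_regular e ->
  (forall theta : algC, eigenvalue (adjmx e) theta -> - (m%:R) <= theta) ->
  regular_of_valency e k -> (2 <= k)%N ->
  diameter e = D -> (2 <= D)%N ->
  a1_number e a1 ->
  (k < m * (a1 + m))%N.
Proof.
move=> m2 [[sym irr] C _] Hev Hreg k2 Ddef D2 Ha1.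
case: (boolP [exists x, exists y, exists z, [&& e x z, e z y, x != y & ~~ e x y]]);
  last first.
  move=> /existsPn Hn.
  have H : forall x y z, e x z -> e z y -> x = y \/ e x y.
    move=> x y z exz ezy; case: (eqVneq x y) => [-> | nxy]; first by left.
    right; move: (Hn x) => /existsPn/(_ y)/existsPn/(_ z).
    by rewrite exz ezy nxy /= => /negbNE.
  have : (diameter e <= 1)%N.
    apply/bigmax_leqP => x _; apply/bigmax_leqP => y _; exact: dist_le1.
  by rewrite Ddef leqNgt (leq_trans _ D2).
case/existsP => x0 /existsP [y0 /existsP [z /and4P [ex0z ezy0 nxy ney]]].
pose c := #|[pred w | e x0 w && e w y0]|.
have c1 : (0 < c)%N by apply/card_gt0P; exists z; rewrite inE ex0z ezy0.
have kE : #|[pred w | e x0 w]| = k.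
  by rewrite -(Hreg x0); apply: eq_card => w; rewrite !inE.
have aE x : e x0 x -> #|[pred w | e x0 w && e x w]| = a1.
  by move=> ex; rewrite -(Ha1 _ _ ex); apply: eq_card => w; rewrite !inE.
have hA : adjmx e \is hermsymmx.
  apply: realsym_hermsym.
    apply/is_hermitianmxP; rewrite expr0 scale1r; apply/matrixP => i j.
    by rewrite !mxE sym.
  by apply/mxOverP => i j; rewrite mxE realn.
pose f x : algC := (x == x0)%:R * k%:R - (e x0 x)%:R * m%:R + (x == y0)%:R * c%:R.
have fr x : (f x)^* = f x.
  by apply: conj_Creal; rewrite /f ?(rpredD, rpredN, rpredM, realn).
pose v : 'rV[algC]_#|T| := \row_i f (enum_val i).
have := @psd _ (adjmx e) m%:R hA Hev v.
have Q1 : (v *m adjmx e *m map_mx Num.Def.conjC v^T) 0 0 = \sum_y (\sum_x f x * (e x y)%:R) * f y.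
  rewrite !mxE -(@sum_enum T (fun y => (\sum_x f x * (e x y)%:R) * f y)).
  apply: eq_bigr => j _; rewrite !mxE fr -(@sum_enum T (fun x => f x * (e x (enum_val j))%:R)).
  congr (_ * _); apply: eq_bigr => i _; rewrite !mxE.
  done.
have Q2 : (v *m map_mx Num.Def.conjC v^T) 0 0 = \sum_x f x * f x.
  rewrite !mxE -(@sum_enum T (fun y => f y * f y)).
  by apply: eq_bigr => j _; rewrite !mxE fr.
rewrite Q1 Q2.
pose N y := #|[pred x | e x0 x && e x y]|.
pose G y : algC := k%:R * (e x0 y)%:R - (N y)%:R * m%:R + c%:R * (e y0 y)%:R.
have gE y : \sum_x f x * (e x y)%:R = G y.
  transitivity (\sum_x (((x == x0)%:R : algC) * (k%:R * (e x y)%:R)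
     - ((e x0 x && e x y))%:R * m%:R + (x == y0)%:R * (c%:R * (e x y)%:R))).
    by apply: eq_bigr => x _; rewrite /f -mulnb natrM; ring.
  by rewrite sum3 !sum_delta -mulr_suml sumb.
under eq_bigr => y _ do rewrite gE.
have e00 : e x0 x0 = false by rewrite irr.
have ey0 : e y0 y0 = false by rewrite irr.
have ey0x0 : e y0 x0 = false by rewrite sym (negbTE ney).
have GX0 : G x0 = - (k%:R * m%:R).
  have NE : N x0 = k by rewrite -kE; apply: eq_card => w; rewrite !inE sym andbb.
  by rewrite /G NE e00 ey0x0 /=; ring.
have GY0 : G y0 = - (c%:R * m%:R).
  have NE : N y0 = c by [].
  by rewrite /G NE ey0 (negbTE ney) /=; ring.
have S1 : \sum_y G y * f y = k%:R * G x0
   - (k%:R * (k%:R * m%:R) - k%:R * (a1%:R * m%:R * m%:R) + c%:R * (c%:R * m%:R))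
   + c%:R * G y0.
  transitivity (\sum_y (((y == x0)%:R : algC) * (G y * k%:R) - (e x0 y)%:R * (G y * m%:R)
       + (y == y0)%:R * (G y * c%:R))).
    by apply: eq_bigr => y _; rewrite /f; ring.
  rewrite sum3 !sum_delta; congr (_ - _ + _); first by ring.
    transitivity (\sum_y (((e x0 y)%:R : algC) * (k%:R * m%:R) - (e x0 y)%:R * ((N y)%:R * m%:R * m%:R)
       + ((e x0 y && e y0 y))%:R * (c%:R * m%:R))).
      apply: eq_bigr => y _; rewrite /G -mulnb natrM.
      by case: (e x0 y); case: (e y0 y); rewrite /=; ring.
    rewrite sum3 -mulr_suml sumb kE -mulr_suml sumb.
    rewrite (@sum_ind T (fun y => e x0 y) _ (a1%:R * m%:R * m%:R)); last first.
      move=> y ey; rewrite /N -(aE y ey); congr (_%:R * _ * _); apply: eq_card => w; by rewrite !inE (sym w).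
    rewrite kE.
    have -> : #|[pred y | e x0 y && e y0 y]| = c.
      by apply: eq_card => w; rewrite !inE (sym y0).
    done.
  by ring.
have FX0 : f x0 = k%:R by rewrite /f eqxx e00 (negbTE nxy) /=; ring.
have FY0 : f y0 = c%:R by rewrite /f eqxx (eq_sym y0) (negbTE nxy) (negbTE ney) /=; ring.
have S2 : \sum_x f x * f x = k%:R * k%:R - k%:R * (- (m%:R * m%:R)) + c%:R * c%:R.
  transitivity (\sum_x (((x == x0)%:R : algC) * (f x * k%:R) - (e x0 x)%:R * (f x * m%:R)
       + (x == y0)%:R * (f x * c%:R))).
    by apply: eq_bigr => y _; rewrite {1}/f; ring.
  rewrite sum3 !sum_delta FX0 FY0.
  rewrite (@sum_ind T (fun y => e x0 y) _ (- (m%:R * m%:R))); last first.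
    move=> x ex; have xx0 : (x == x0) = false.
      by apply/negbTE; apply: contraTneq ex => ->; rewrite e00.
    have xy0 : (x == y0) = false.
      by apply/negbTE; apply: contraNneq ney => <-.
    by rewrite /f xx0 xy0 ex /=; ring.
  by rewrite kE; ring.
rewrite S1 S2 GX0 GY0.
have -> : k%:R * - (k%:R * m%:R) -
     (k%:R * (k%:R * m%:R) - k%:R * (a1%:R * m%:R * m%:R) + c%:R * (c%:R * m%:R)) +
     c%:R * - (c%:R * m%:R) +
     m%:R * (k%:R * k%:R - k%:R * - (m%:R * m%:R) + c%:R * c%:R) =
   ((k * a1 * m * m + k * m * m * m)%N%:R - (k * k * m + c * c * m)%N%:R : algC).
  by rewrite !natrD !natrM; ring.
rewrite subr_ge0 ler_nat => H.
rewrite ltnNge; apply/negP => hk.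
have h1 : (k * (m * (a1 + m)) * m <= k * k * m)%N.
  by rewrite leq_mul // leq_mul.
have h2 : (k * a1 * m * m + k * m * m * m = k * (m * (a1 + m)) * m)%N.
  by ring.
have h3 : (0 < c * c * m)%N by rewrite !muln_gt0 c1 (leq_trans _ m2).
have := leq_trans H (leq_trans (eq_leq h2) h1).
move=> h.
have h4 : (k * k * m + 0 < k * k * m + c * c * m)%N by rewrite ltn_add2l.
rewrite addn0 in h4.
by rewrite ltnNge h in h4.
Qed.
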